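(* Let $m,n$ be positive integers. (1) If $n$ is odd, $m$ is odd, and at least one of $m,n$ is larger than $1$, then there is no nullhomotopic knight's tour on $\mathcal{M}_{m,n}$ and no nullhomotopic knight's tour on $\mathcal{K}_{m,n}$. (2) Suppose $n$ is even. If $m$ is even, there is no generating knight's tour on $\mathcal{M}_{m,n}$ and no Möbius knight's tour on $\mathcal{K}_{m,n}$. If $m$ is odd, there is no cylindrical knight's tour on $\mathcal{K}_{m,n}$.
   Context: Let $\mathcal{P}$ be the graph with vertex set $\mathbb{Z}^2$ in which $(a,b)$ and $(a',b')$ are adjacent iff $\{|a-a'|,|b-b'|\}=\{1,2\}$, and let $\mathcal{S}_m$ be its induced subgraph on $\{(a,b): 0\le a<m\}$. Let $\tau(a,b)=(a+m,b)$ and $\sigma(a,b)=(m-1-a,\,b+n)$. Define the multigraph $\mathcal{M}_{m,n}=\mathcal{S}_m/\langle\sigma\rangle$ and the pseudograph $\mathcal{K}_{m,n}=\mathcal{P}/\langle\tau,\sigma\rangle$ (vertices and edges are orbits of vertices and edges under these free actions; multiple edges and loops may occur); these are the knight's move graphs of the $m\times n$ Möbius strip and Klein bottle boards, and the quotient maps are coverings. A knight's tour is a closed walk visiting every vertex exactly once apart from the repeated start/end vertex (a Hamiltonian cycle). Regard a tour as a closed walk based at vertex $(0,0)$ and take its unique lift (to $\mathcal{S}_m$, resp. $\mathcal{P}$) starting at $(0,0)$. A tour on $\mathcal{M}_{m,n}$ is nullhomotopic if the lift ends at $(0,0)$ and generating if it ends at $(m-1,\pm n)$. A tour on $\mathcal{K}_{m,n}$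 is nullhomotopic if the lift ends at $(0,0)$, cylindrical if it ends at $(\pm m,0)$, and Möbius if it ends at $(m-1,\pm n)$. *)

(* Defs.v *)
From Stdlib Require Import ZArith List Relations.
Import ListNotations.
Open Scope Z_scope.

Definition pt := (Z * Z)%type.

Definition knight_adj (x y : pt) : Prop :=
  (Z.abs (fst x - fst y) = 1 /\ Z.abs (snd x - snd y) = 2) \/
  (Z.abs (fst x - fst y) = 2 /\ Z.abs (snd x - snd y) = 1).

Definition in_strip (m : Z) (x : pt) : Prop := 0 <= fst x < m.

Definition tau (m : Z) (x : pt) : pt := (fst x + m, snd x).
Definition sigma (m n : Z) (x : pt) : pt := (m - 1 - fst x, snd x + n).

Definition gen_step (gens : list (pt -> pt)) (x y : pt) : Prop :=
  exists g, In g gens /\ y = g x.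
Definition same_orbit (gens : list (pt -> pt)) : relation pt :=
  clos_refl_sym_trans pt (gen_step gens).

(* Orbits of oriented edges (x,y); an (unoriented) edge orbit of the
   quotient is identified with the orbit of (x,y) together with that of (y,x). *)
Definition edge_step (gens : list (pt -> pt)) (e f : pt * pt) : Prop :=
  exists g, In g gens /\ f = (g (fst e), g (snd e)).
Definition same_edge (gens : list (pt -> pt)) (e f : pt * pt) : Prop :=
  clos_refl_sym_trans (pt * pt) (edge_step gens) e f \/
  clos_refl_sym_trans (pt * pt) (edge_step gens) e (snd f, fst f).

(* A knight's tour (Hamiltonian cycle) on the quotient D / <gens>, regarded as a
   closed walk of length N based at the vertex of (0,0), given by its unique
   lift p_0 = (0,0), p_1, ..., p_N to the cover (vertex set D, knight moves).
   - consecutive lift points are knight-adjacent (so edge i of the walk is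
     the orbit of the cover edge {p_i, p_(i+1)});
   - the walk is closed in the quotient: p_N lies in the orbit of p_0;
   - every vertex of the quotient is visited by exactly one p_i, i < N;
   - the N edges of the walk are pairwise distinct edges of the quotient. *)
Definition is_tour (D : pt -> Prop) (gens : list (pt -> pt)) (N : nat)
    (p : nat -> pt) : Prop :=
  p 0%nat = (0, 0) /\
  (forall i, (i <= N)%nat -> D (p i)) /\
  (forall i, (i < N)%nat -> knight_adj (p i) (p (S i))) /\
  same_orbit gens (p N) (p 0%nat) /\
  (forall x, D x -> exists! i, (i < N)%nat /\ same_orbit gens (p i) x) /\
  (forall i j, (i < j)%nat -> (j < N)%nat ->
     ~ same_edge gens (p i, p (S i)) (p j, p (S j))).

Definition mobius_tour (m n : Z) (N : nat) (p : nat -> pt) : Prop :=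
  is_tour (in_strip m) [sigma m n] N p.

Definition klein_tour (m n : Z) (N : nat) (p : nat -> pt) : Prop :=
  is_tour (fun _ => True) [tau m; sigma m n] N p.

(* Homotopy types, read off from the endpoint p_N of the lift. *)
Definition nullhomotopic (N : nat) (p : nat -> pt) : Prop := p N = (0, 0).
Definition generating (m n : Z) (N : nat) (p : nat -> pt) : Prop :=
  p N = (m - 1, n) \/ p N = (m - 1, - n).
Definition cylindrical (m : Z) (N : nat) (p : nat -> pt) : Prop :=
  p N = (m, 0) \/ p N = (- m, 0).
Definition mobius_type (m n : Z) (N : nat) (p : nat -> pt) : Prop :=
  p N = (m - 1, n) \/ p N = (m - 1, - n).

(* Main.v *)
Require Import Defs.
From Stdlib Require Import ZArith List Relations Lia.
Import ListNotations.
Open Scope Z_scope.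

Definition rr (m n : Z) (x : pt) : pt :=
  let a := fst x mod m in let q := snd x / n in let c := snd x mod n in
  if Z.even q then (a, c) else (m - 1 - a, c).

Lemma count_bij (N K : nat) (f : nat -> nat) :
  (forall i, (i < N)%nat -> (f i < K)%nat) ->
  (forall i j, (i < N)%nat -> (j < N)%nat -> f i = f j -> i = j) ->
  (forall k, (k < K)%nat -> exists i, (i < N)%nat /\ f i = k) -> N = K.
Proof.
  intros Hr Hi Hs.
  assert (H1 : (length (map f (seq 0 N)) <= length (seq 0 K))%nat).
  { apply NoDup_incl_length.
    - apply NoDup_map_NoDup_ForallPairs; [|apply seq_NoDup].
      intros x y Hx Hy. apply in_seq in Hx, Hy. apply Hi; lia.
    - intros y Hy. apply in_map_iff in Hy as [x [<- Hx]]. apply in_seq in Hx.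
      apply in_seq. specialize (Hr x). lia. }
  assert (H2 : (length (seq 0 K) <= length (map f (seq 0 N)))%nat).
  { apply NoDup_incl_length. apply seq_NoDup.
    intros y Hy. apply in_seq in Hy. destruct (Hs y) as [i [Hi1 Hi2]]; [lia|].
    apply in_map_iff. exists i. split; auto. apply in_seq. lia. }
  rewrite length_map, !length_seq in *. lia.
Qed.

Lemma mod_flip m a : 0 < m -> (m - 1 - a) mod m = m - 1 - a mod m.
Proof.
  intros Hm. symmetry. apply (Z.mod_unique _ _ (- (a / m))).
  - left. pose proof (Z.mod_pos_bound a m Hm). lia.
  - pose proof (Z.div_mod a m). lia.
Qed.

Lemma rr_sigma m n x : 0 < m -> 0 < n -> rr m n (sigma m n x) = rr m n x.
Proof.
  intros Hm Hn. destruct x as [a b]. unfold rr, sigma; simpl.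
  rewrite mod_flip by lia.
  replace (b + n) with (b + 1 * n) by ring.
  rewrite Z.div_add, Z.mod_add by lia.
  rewrite Z.even_add. destruct (Z.even (b / n)); simpl; f_equal; lia.
Qed.

Lemma rr_tau m n x : 0 < m -> 0 < n -> rr m n (tau m x) = rr m n x.
Proof.
  intros Hm Hn. destruct x as [a b]. unfold rr, tau; simpl.
  replace (a + m) with (a + 1 * m) by ring.
  rewrite Z.mod_add by lia. reflexivity.
Qed.

Lemma orbit_sym gens x y : same_orbit gens x y -> same_orbit gens y x.
Proof. intros; apply rst_sym; auto. Qed.
Lemma orbit_trans gens x y z : same_orbit gens x y -> same_orbit gens y z -> same_orbit gens x z.
Proof. intros; eapply rst_trans; eauto. Qed.
Lemma orbit_step gens g x : In g gens -> same_orbit gens x (g x).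
Proof. intros; apply rst_step; exists g; auto. Qed.

Lemma rep_sigma m n gens : 0 < m -> 0 < n -> In (sigma m n) gens ->
  forall c, 0 <= c < n -> forall q a, 0 <= a < m ->
  same_orbit gens (a, n * q + c) (if Z.even q then (a, c) else (m - 1 - a, c)).
Proof.
  intros Hm Hn Hg c Hc q. induction q using Z.peano_ind; intros a Ha.
  - simpl. replace (n * 0 + c) with c by ring. apply rst_refl.
  - specialize (IHq (m - 1 - a) ltac:(lia)).
    replace (m - 1 - (m - 1 - a)) with a in IHq by ring.
    rewrite Z.even_succ, <- Z.negb_even.
    eapply orbit_trans; [|destruct (Z.even q); simpl in *; exact IHq].
    apply orbit_sym.
    replace (a, n * Z.succ q + c) with (sigma m n (m - 1 - a, n * q + c)).
    2:{ unfold sigma; simpl; f_equal; lia. }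
    apply orbit_step; auto.
  - specialize (IHq (m - 1 - a) ltac:(lia)).
    replace (m - 1 - (m - 1 - a)) with a in IHq by ring.
    rewrite Z.even_pred, <- Z.negb_even.
    eapply orbit_trans; [|destruct (Z.even q); simpl in *; exact IHq].
    replace (m - 1 - a, n * q + c) with (sigma m n (a, n * Z.pred q + c)).
    2:{ unfold sigma; simpl; f_equal; lia. }
    apply orbit_step; auto.
Qed.

Lemma rep_strip m n gens : 0 < m -> 0 < n -> In (sigma m n) gens ->
  forall x, 0 <= fst x < m -> same_orbit gens x (rr m n x).
Proof.
  intros Hm Hn Hg [a b] Ha. simpl in Ha. unfold rr; simpl.
  rewrite (Z.mod_small a m) by lia.
  pose proof (Z.div_mod b n ltac:(lia)).
  pose proof (Z.mod_pos_bound b n Hn).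
  rewrite H at 1. apply rep_sigma; auto.
Qed.

Lemma rep_tau m gens : 0 < m -> In (tau m) gens ->
  forall a' b k, same_orbit gens (m * k + a', b) (a', b).
Proof.
  intros Hm Hg a' b k. induction k using Z.peano_ind.
  - replace (m * 0 + a') with a' by ring. apply rst_refl.
  - eapply orbit_trans; [|apply IHk]. apply orbit_sym.
    replace (m * Z.succ k + a', b) with (tau m (m * k + a', b)).
    2:{ unfold tau; simpl; f_equal; lia. } apply orbit_step; auto.
  - eapply orbit_trans; [|apply IHk].
    replace (m * k + a', b) with (tau m (m * Z.pred k + a', b)).
    2:{ unfold tau; simpl; f_equal; lia. } apply orbit_step; auto.
Qed.

Lemma rep_klein m n : 0 < m -> 0 < n ->
  forall x, same_orbit [tau m; sigma m n] x (rr m n x).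
Proof.
  intros Hm Hn [a b].
  eapply orbit_trans with (y := (a mod m, b)).
  - rewrite (Z.div_mod a m) at 1 by lia. apply rep_tau; simpl; auto.
  - replace (rr m n (a, b)) with (rr m n (a mod m, b)).
    2:{ unfold rr; simpl. rewrite Z.mod_mod by lia. reflexivity. }
    apply rep_strip; simpl; auto. apply Z.mod_pos_bound; auto.
Qed.

Lemma rr_inv_orbit m n gens : 0 < m -> 0 < n ->
  (forall g, In g gens -> g = tau m \/ g = sigma m n) ->
  forall x y, same_orbit gens x y -> rr m n x = rr m n y.
Proof.
  intros Hm Hn Hg x y H. induction H; try congruence.
  destruct H as [g [Hin ->]]. destruct (Hg g Hin) as [->| ->].
  - symmetry; apply rr_tau; auto.
  - symmetry; apply rr_sigma; auto.
Qed.

Lemma rr_box m n x : 0 < m -> 0 < n -> 0 <= fst (rr m n x) < m /\ 0 <= snd (rr m n x) < n.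
Proof.
  intros Hm Hn. unfold rr. pose proof (Z.mod_pos_bound (fst x) m Hm).
  pose proof (Z.mod_pos_bound (snd x) n Hn).
  destruct (Z.even _); simpl; lia.
Qed.

Lemma rr_fix m n a b : 0 <= a < m -> 0 <= b < n -> rr m n (a, b) = (a, b).
Proof.
  intros Ha Hb. unfold rr; simpl. rewrite Z.mod_small, (Z.mod_small b), Z.div_small by lia.
  reflexivity.
Qed.

Lemma tour_count m n D gens N p : 0 < m -> 0 < n ->
  (forall g, In g gens -> g = tau m \/ g = sigma m n) ->
  (forall x, D x -> same_orbit gens x (rr m n x)) ->
  (forall a b, 0 <= a < m -> 0 <= b < n -> D (a, b)) ->
  is_tour D gens N p -> Z.of_nat N = m * n.
Proof.
  intros Hm Hn Hg Hrep HD [H0 [HDp [Hadj [Hcl [Huniq Hedge]]]]].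
  set (f := fun i => Z.to_nat (fst (rr m n (p i)) * n + snd (rr m n (p i)))).
  assert (E : N = Z.to_nat (m * n)).
  { apply (count_bij N _ f).
    - intros i Hi. unfold f. pose proof (rr_box m n (p i) Hm Hn).
      assert (fst (rr m n (p i)) * n <= (m - 1) * n) by (apply Z.mul_le_mono_nonneg_r; lia).
      lia.
    - intros i j Hi Hj Hf. unfold f in Hf.
      pose proof (rr_box m n (p i) Hm Hn). pose proof (rr_box m n (p j) Hm Hn).
      assert (Heq : rr m n (p i) = rr m n (p j)).
      { destruct (rr m n (p i)) as [a1 b1], (rr m n (p j)) as [a2 b2]; simpl in *.
        assert (a1 * n + b1 = a2 * n + b2) by lia.
        assert (a1 = a2) by nia. f_equal; lia. }
      assert (Hij : same_orbit gens (p i) (p j)).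
      { eapply orbit_trans; [apply Hrep, HDp; lia|].
        rewrite Heq. apply orbit_sym, Hrep, HDp; lia. }
      destruct (Huniq (p j) (HDp j ltac:(lia))) as [k [_ Hk]].
      assert (k = i) by (apply Hk; auto).
      assert (k = j) by (apply Hk; split; auto; apply rst_refl). congruence.
    - intros k Hk.
      set (a := Z.of_nat k / n). set (b := Z.of_nat k mod n).
      pose proof (Z.div_mod (Z.of_nat k) n ltac:(lia)).
      pose proof (Z.mod_pos_bound (Z.of_nat k) n Hn).
      assert (0 <= a) by (apply Z.div_pos; lia).
      assert (a < m) by (unfold a; apply Z.div_lt_upper_bound; lia).
      destruct (Huniq (a, b) (HD a b ltac:(lia) ltac:(lia))) as [i [[Hi Hio] _]].
      exists i. split; auto. unfold f.
      rewrite (rr_inv_orbit m n gens Hm Hn Hg _ _ Hio), rr_fix by lia. simpl.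
      fold a b in H. lia. }
  rewrite E. rewrite Z2Nat.id; nia.
Qed.

Lemma tour_parity D gens N p : is_tour D gens N p ->
  forall i, (i <= N)%nat -> Z.even (fst (p i) + snd (p i)) = Z.even (Z.of_nat i).
Proof.
  intros [H0 [_ [Hadj _]]] i. induction i; intros Hi.
  - rewrite H0. reflexivity.
  - specialize (Hadj i ltac:(lia)). rewrite Nat2Z.inj_succ, Z.even_succ, <- Z.negb_even.
    rewrite <- IHi by lia.
    assert (exists k, fst (p (S i)) + snd (p (S i)) = fst (p i) + snd (p i) + 2 * k + 1) as [k ->].
    { unfold knight_adj in Hadj.
      destruct Hadj as [[A B]|[A B]];
      destruct (Z.abs_spec (fst (p i) - fst (p (S i)))) as [[? ?]|[? ?]];
      destruct (Z.abs_spec (snd (p i) - snd (p (S i)))) as [[? ?]|[? ?]];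
      first [ exists (-2); lia | exists (-1); lia | exists 0; lia | exists 1; lia | exists 2; lia]. }
    rewrite Z.even_add, Z.even_add, Z.even_mul. simpl.
    destruct (Z.even (fst (p i) + snd (p i))); reflexivity.
Qed.

Lemma mob_count m n N p : 0 < m -> 0 < n -> mobius_tour m n N p ->
  Z.even (fst (p N) + snd (p N)) = Z.even (m * n).
Proof.
  intros Hm Hn H. rewrite (tour_parity _ _ _ _ H N) by lia.
  rewrite (tour_count m n (in_strip m) [sigma m n] N p); auto.
  all: try (intros g [<-|[]]; auto).
  all: try (intros x Hx; apply rep_strip; simpl; auto).
  all: try (intros a b Ha _; unfold in_strip; simpl; lia).
Qed.

Lemma klein_count m n N p : 0 < m -> 0 < n -> klein_tour m n N p ->
  Z.even (fst (p N) + snd (p N)) = Z.even (m * n).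
Proof.
  intros Hm Hn H. rewrite (tour_parity _ _ _ _ H N) by lia.
  rewrite (tour_count m n (fun _ => True) [tau m; sigma m n] N p); auto.
  all: try (intros g [<-|[<-|[]]]; auto).
  all: try (intros x _; apply rep_klein; auto).
Qed.

Theorem proposition3p5 (m n : Z) (Hm : 0 < m) (Hn : 0 < n) :
  (Z.odd n = true -> Z.odd m = true -> (1 < m \/ 1 < n) ->
     (forall N p, mobius_tour m n N p -> ~ nullhomotopic N p) /\
     (forall N p, klein_tour m n N p -> ~ nullhomotopic N p)) /\
  (Z.even n = true ->
     (Z.even m = true ->
        (forall N p, mobius_tour m n N p -> ~ generating m n N p) /\
        (forall N p, klein_tour m n N p -> ~ mobius_type m n N p)) /\
     (Z.odd m = true ->
        forall N p, klein_tour m n N p -> ~ cylindrical m N p)).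
Proof.
  split.
  - intros On Om _. rewrite <- Z.negb_even in On, Om.
    assert (E : Z.even (m * n) = false).
    { rewrite Z.even_mul. destruct (Z.even m), (Z.even n); simpl in *; congruence. }
    split; intros N p H Hnull; unfold nullhomotopic in Hnull.
    + pose proof (mob_count m n N p Hm Hn H). rewrite Hnull, E in H0. discriminate.
    + pose proof (klein_count m n N p Hm Hn H). rewrite Hnull, E in H0. discriminate.
  - intros En. assert (E : Z.even (m * n) = true) by (rewrite Z.even_mul, En, Bool.orb_true_r; auto).
    split; [intros Em; split|intros Om]; intros N p H Hg.
    + pose proof (mob_count m n N p Hm Hn H). rewrite E in H0.
      destruct Hg as [Hg|Hg]; rewrite Hg in H0; simpl in H0;
      rewrite Z.even_add, Z.even_sub, Em, ?Z.even_opp, En in H0; discriminate.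
    + pose proof (klein_count m n N p Hm Hn H). rewrite E in H0.
      destruct Hg as [Hg|Hg]; rewrite Hg in H0; simpl in H0;
      rewrite Z.even_add, Z.even_sub, Em, ?Z.even_opp, En in H0; discriminate.
    + pose proof (klein_count m n N p Hm Hn H). rewrite E in H0.
      rewrite <- Z.negb_even in Om.
      destruct Hg as [Hg|Hg]; rewrite Hg in H0; simpl in H0;
      rewrite Z.even_add, ?Z.even_opp in H0; destruct (Z.even m); simpl in *; discriminate.
Qed.
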